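(* Assume Hypothesis (H). Let $T\in\mathcal M$, let $\mathfrak k$ be a Lie subalgebra with $\mathfrak h\subsetneq\mathfrak k$, and let $\tau>0$. Then the set $\mathcal C(\mathfrak k,\tau)=\{g\in\mathcal M_T(\mathfrak k):\lambda_+(g)\le\tau\}$ is compact in $\mathcal M_T(\mathfrak k)$.
   Context: Let $G$ be a compact connected Lie group with Lie algebra $\mathfrak g$ and $H<G$ a closed connected subgroup with Lie algebra $\mathfrak h$; $M=G/H$, $\dim M\ge3$. Fix an $\mathrm{Ad}(G)$-invariant inner product $Q$ on $\mathfrak g$; $\mathfrak v\ominus\mathfrak u$ is the $Q$-orthogonal complement; $\mathfrak m=\mathfrak g\ominus\mathfrak h$. $\mathcal M$ is the set of $\mathrm{Ad}(H)$-invariant inner products on $\mathfrak m$. $\mathcal M(\mathfrak k)$ is the set of $\mathrm{Ad}(H)$-invariant inner products on $\mathfrak k\ominus\mathfrak h$, with the topology inherited from the space of bilinear forms on $\mathfrak k\ominus\mathfrak h$; $\mathcal M_T(\mathfrak k)=\{g\in\mathcal M(\mathfrak k):\mathrm{tr}_gT|_{\mathfrak k\ominus\mathfrak h}=1\}$ with the subspace topology, where $\mathrm{tr}_g$ denotes trace with respect to $g$. For $g\in\mathcal M(\mathfrak k)$, $\lambda_+(g)$ is the supremum of $g(X,X)$ over $X\in\mathfrak k\ominus\mathfrak h$ with $Q(X,X)=1$. Hypothesis (H): every Lie subalgebra $\mathfrak s\subset\mathfrak g$ with $\mathfrak h\subsetneq\mathfrak s$ satisfies (1) for all nonzero $\mathrm{Ad}(H)$-invariant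 subspaces $\mathfrak u\subset\mathfrak s\ominus\mathfrak h$ and $\mathfrak v\subset\mathfrak g\ominus\mathfrak s$, the representations $\mathrm{Ad}(H)|_{\mathfrak u}$ and $\mathrm{Ad}(H)|_{\mathfrak v}$ are inequivalent; (2) $[\mathfrak r,\mathfrak s]\neq\{0\}$ for every $\mathrm{Ad}(H)$-invariant one-dimensional subspace $\mathfrak r\subset\mathfrak g\ominus\mathfrak s$. *)

(* Defs.v *)
(* Model: g = R^n in Q-orthonormal coordinates (so Q = standard dot product),
   vectors are functions nat -> R (only indices < n matter), bilinear forms on
   a subspace V of R^n are n x n matrices "supported on V". *)
From Stdlib Require Import Reals List.
Open Scope R_scope.

Definition vec := nat -> R.
Definition mat := nat -> nat -> R.

Fixpoint rsum (n : nat) (f : nat -> R) : R :=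
  match n with O => 0 | S m => rsum m f + f m end.

Definition dot (n : nat) (x y : vec) : R := rsum n (fun i => x i * y i).
Definition vadd (x y : vec) : vec := fun i => x i + y i.
Definition vscal (a : R) (x : vec) : vec := fun i => a * x i.
Definition veq (x y : vec) : Prop := forall i, x i = y i.
Definition inRn (n : nat) (x : vec) : Prop := forall i, (n <= i)%nat -> x i = 0.
Definition nonzero_vec (x : vec) : Prop := exists i, x i <> 0.

Definition is_subspace (n : nat) (S : vec -> Prop) : Prop :=
  (forall x, S x -> inRn n x) /\
  (forall x y, S x -> veq x y -> S y) /\
  S (fun _ => 0) /\
  (forall x y, S x -> S y -> S (vadd x y)) /\
  (forall a x, S x -> S (vscal a x)).

Definition whole (n : nat) : vec -> Prop := inRn n.
Definition nontrivial (S : vec -> Prop) : Prop := exists x, S x /\ nonzero_vec x.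

Definition ocomp (n : nat) (V U : vec -> Prop) : vec -> Prop :=
  fun x => V x /\ forall y, U y -> dot n x y = 0.

Definition dim_ge (n : nat) (V : vec -> Prop) (d : nat) : Prop :=
  exists f : nat -> vec, (forall j, (j < d)%nat -> V (f j)) /\
    forall c : nat -> R, (forall i, rsum d (fun j => c j * f j i) = 0) ->
      forall j, (j < d)%nat -> c j = 0.

Definition one_dim (r : vec -> Prop) : Prop :=
  exists e, nonzero_vec e /\ forall x, r x <-> exists a, veq x (vscal a e).

Definition is_lie_algebra (n : nat) (br : vec -> vec -> vec) : Prop :=
  (forall x y, inRn n x -> inRn n y -> inRn n (br x y)) /\
  (forall x x' y y', veq x x' -> veq y y' -> veq (br x y) (br x' y')) /\
  (forall a b x y z, inRn n x -> inRn n y -> inRn n z ->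
     veq (br (vadd (vscal a x) (vscal b y)) z)
         (vadd (vscal a (br x z)) (vscal b (br y z)))) /\
  (forall x y, inRn n x -> inRn n y -> veq (br x y) (vscal (-1) (br y x))) /\
  (forall x y z, inRn n x -> inRn n y -> inRn n z ->
     veq (vadd (br x (br y z)) (vadd (br y (br z x)) (br z (br x y))))
         (fun _ => 0)).

(* Q (= dot) is ad(g)-invariant, equivalently Ad(G)-invariant for connected G *)
Definition Q_ad_invariant (n : nat) (br : vec -> vec -> vec) : Prop :=
  forall x y z, inRn n x -> inRn n y -> inRn n z ->
    dot n (br x y) z = - dot n y (br x z).

Definition is_subalgebra (n : nat) (br : vec -> vec -> vec) (s : vec -> Prop) : Prop :=
  is_subspace n s /\ forall x y, s x -> s y -> s (br x y).

(* Ad(H)-invariance, H connected with Lie algebra h: ad(h)-invariance *)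
Definition ad_inv (br : vec -> vec -> vec) (h U : vec -> Prop) : Prop :=
  forall Y x, h Y -> U x -> U (br Y x).

(* equivalence of the representations of H (equivalently of h) on U and V *)
Definition rep_equiv (br : vec -> vec -> vec) (h U V : vec -> Prop) : Prop :=
  exists phi : vec -> vec,
    (forall x, U x -> V (phi x)) /\
    (forall a b x y, U x -> U y ->
       veq (phi (vadd (vscal a x) (vscal b y))) (vadd (vscal a (phi x)) (vscal b (phi y)))) /\
    (forall x y, U x -> U y -> veq (phi x) (phi y) -> veq x y) /\
    (forall y, V y -> exists x, U x /\ veq (phi x) y) /\
    (forall Y x, h Y -> U x -> veq (phi (br Y x)) (br Y (phi x))).

Definition Hyp_H (n : nat) (br : vec -> vec -> vec) (h : vec -> Prop) : Prop :=
  forall s, is_subalgebra n br s -> (forall x, h x -> s x) -> (exists x, s x /\ ~ h x) ->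
    (forall u v, is_subspace n u -> is_subspace n v -> nontrivial u -> nontrivial v ->
       ad_inv br h u -> ad_inv br h v ->
       (forall x, u x -> ocomp n s h x) -> (forall x, v x -> ocomp n (whole n) s x) ->
       ~ rep_equiv br h u v) /\
    (forall r, is_subspace n r -> one_dim r -> ad_inv br h r ->
       (forall x, r x -> ocomp n (whole n) s x) ->
       exists x y, r x /\ s y /\ nonzero_vec (br x y)).

Definition bil (n : nat) (B : mat) (x y : vec) : R :=
  rsum n (fun i => rsum n (fun j => x i * B i j * y j)).

(* B represents a bilinear form on the subspace V: it vanishes outside n x n
   and as soon as one argument is Q-orthogonal to V *)
Definition supported_on (n : nat) (V : vec -> Prop) (B : mat) : Prop :=
  (forall i j, (n <= i)%nat \/ (n <= j)%nat -> B i j = 0) /\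
  (forall x y, inRn n x -> inRn n y -> (forall v, V v -> dot n x v = 0) ->
     bil n B x y = 0 /\ bil n B y x = 0).

Definition inv_inner_product (n : nat) (br : vec -> vec -> vec) (h V : vec -> Prop)
  (B : mat) : Prop :=
  supported_on n V B /\
  (forall i j, B i j = B j i) /\
  (forall x, V x -> nonzero_vec x -> 0 < bil n B x x) /\
  (forall Y x y, h Y -> V x -> V y -> bil n B (br Y x) y + bil n B x (br Y y) = 0).

(* trace of T|_V with respect to the inner product G on V equals t:
   computed in a G-orthonormal basis of V *)
Definition trace_wrt (n : nat) (V : vec -> Prop) (G T : mat) (t : R) : Prop :=
  exists (d : nat) (e : nat -> vec),
    (forall i, (i < d)%nat -> V (e i)) /\
    (forall i j, (i < d)%nat -> (j < d)%nat ->
       bil n G (e i) (e j) = if Nat.eqb i j then 1 else 0) /\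
    (forall x, V x -> exists c : nat -> R, veq x (fun k => rsum d (fun i => c i * e i k))) /\
    t = rsum d (fun i => bil n T (e i) (e i)).

(* lambda_+(G) <= tau, with lambda_+(G) = sup { G(X,X) : X in V, Q(X,X) = 1 } *)
Definition lambda_plus_le (n : nat) (V : vec -> Prop) (G : mat) (tau : R) : Prop :=
  forall X, V X -> dot n X X = 1 -> bil n G X X <= tau.

Definition M_k (n : nat) (br : vec -> vec -> vec) (h k : vec -> Prop) : mat -> Prop :=
  inv_inner_product n br h (ocomp n k h).
Definition M_T_k (n : nat) (br : vec -> vec -> vec) (h k : vec -> Prop) (T : mat) :
  mat -> Prop := fun G => M_k n br h k G /\ trace_wrt n (ocomp n k h) G T 1.
Definition C_set (n : nat) (br : vec -> vec -> vec) (h k : vec -> Prop) (T : mat)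
  (tau : R) : mat -> Prop :=
  fun G => M_T_k n br h k T G /\ lambda_plus_le n (ocomp n k h) G tau.

(* topology on (matrices representing) bilinear forms: the entrywise one *)
Definition mball (n : nat) (A : mat) (eps : R) (B : mat) : Prop :=
  forall i j, (i < n)%nat -> (j < n)%nat -> Rabs (B i j - A i j) < eps.
Definition mopen (n : nat) (U : mat -> Prop) : Prop :=
  forall A, U A -> exists eps, 0 < eps /\ forall B, mball n A eps B -> U B.
Definition mcompact (n : nat) (C : mat -> Prop) : Prop :=
  forall (I : Type) (U : I -> mat -> Prop), (forall i, mopen n (U i)) ->
    (forall A, C A -> exists i, U i A) ->
    exists l : list I, forall A, C A -> exists i, In i l /\ U i A.

(* Main.v *)
Require Import Defs.
From Stdlib Require Import Reals List.
Open Scope R_scope.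
From Stdlib Require Import Lra Lia Classical Bool.

Lemma rsum_ext n f g : (forall i, (i < n)%nat -> f i = g i) -> rsum n f = rsum n g.
Proof. induction n; intros H; simpl; [reflexivity|]. rewrite IHn, H; auto. Qed.

Lemma rsum_add n f g : rsum n (fun i => f i + g i) = rsum n f + rsum n g.
Proof. induction n; simpl; [lra|]. rewrite IHn; lra. Qed.

Lemma rsum_sub n f g : rsum n (fun i => f i - g i) = rsum n f - rsum n g.
Proof. induction n; simpl; [lra|]. rewrite IHn; lra. Qed.

Lemma rsum_mul_l n a f : rsum n (fun i => a * f i) = a * rsum n f.
Proof. induction n; simpl; [lra|]. rewrite IHn; lra. Qed.

Lemma rsum_mul_r n a f : rsum n (fun i => f i * a) = rsum n f * a.
Proof. induction n; simpl; [lra|]. rewrite IHn; lra. Qed.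

Lemma rsum_zero n f : (forall i, (i < n)%nat -> f i = 0) -> rsum n f = 0.
Proof. induction n; intros H; simpl; [reflexivity|]. rewrite IHn, H; auto; lra. Qed.

Lemma rsum_swap n m (f : nat -> nat -> R) :
  rsum n (fun i => rsum m (fun j => f i j)) = rsum m (fun j => rsum n (fun i => f i j)).
Proof.
  induction n; simpl.
  - symmetry; apply rsum_zero; auto.
  - rewrite IHn. rewrite <- rsum_add. reflexivity.
Qed.

Lemma rsum_single n k f : (k < n)%nat -> (forall i, (i < n)%nat -> i <> k -> f i = 0) ->
  rsum n f = f k.
Proof.
  induction n; intros Hk H; [lia|]. simpl.
  destruct (Nat.eq_dec k n) as [->|Hne].
  - rewrite (rsum_zero n f); [lra|]. intros i Hi; apply H; lia.
  - rewrite IHn; [| lia | intros; apply H; lia]. rewrite (H n); [lra|lia|lia].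
Qed.

Lemma rsum_nonneg n f : (forall i, (i < n)%nat -> 0 <= f i) -> 0 <= rsum n f.
Proof. induction n; intros H; simpl; [lra|]. pose proof (H n ltac:(lia)).
  assert (0 <= rsum n f) by (apply IHn; auto). lra. Qed.

Lemma rsum_ge_term n k f : (forall i, (i < n)%nat -> 0 <= f i) -> (k < n)%nat -> f k <= rsum n f.
Proof.
  induction n; intros H Hk; [lia|]. simpl.
  destruct (Nat.eq_dec k n) as [->|Hne].
  - assert (0 <= rsum n f) by (apply rsum_nonneg; auto). lra.
  - assert (f k <= rsum n f) by (apply IHn; auto; lia). specialize (H n ltac:(lia)). lra.
Qed.

Lemma rsum_tail m n f : (m <= n)%nat -> (forall i, (m <= i)%nat -> (i < n)%nat -> f i = 0) ->
  rsum n f = rsum m f.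
Proof.
  induction n; intros Hmn H.
  - assert (m = 0)%nat by lia. subst. reflexivity.
  - destruct (Nat.eq_dec m (S n)) as [->|Hne]; [reflexivity|].
    simpl. rewrite IHn; [| lia | intros; apply H; lia]. rewrite (H n); [lra|lia|lia].
Qed.

Lemma rsum_const1 n : rsum n (fun _ => 1) = INR n.
Proof. induction n; [reflexivity|]. simpl rsum. rewrite IHn. rewrite (S_INR n). lra. Qed.

Lemma rsum_pos n f k : (forall i, (i < n)%nat -> 0 <= f i) -> (k < n)%nat -> 0 < f k -> 0 < rsum n f.
Proof. intros H Hk Hp. pose proof (rsum_ge_term n k f H Hk). lra. Qed.

Definition lc (d : nat) (c : nat -> R) (e : nat -> vec) : vec :=
  fun k => rsum d (fun i => c i * e i k).

Lemma lc_ext_c d c c' e : (forall i, (i < d)%nat -> c i = c' i) -> veq (lc d c e) (lc d c' e).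
Proof. intros H k. unfold lc. apply rsum_ext. intros i Hi. rewrite H; auto. Qed.

Lemma lc_ext_e d c e e' : (forall i, (i < d)%nat -> veq (e i) (e' i)) -> veq (lc d c e) (lc d c e').
Proof. intros H k. unfold lc. apply rsum_ext. intros i Hi. rewrite H; auto. Qed.

Lemma lc_lc d d' c (D : nat -> nat -> R) b :
  veq (lc d c (fun i => lc d' (D i) b)) (lc d' (fun l => rsum d (fun i => c i * D i l)) b).
Proof.
  intros k. unfold lc.
  transitivity (rsum d (fun i => rsum d' (fun l => c i * D i l * b l k))).
  - apply rsum_ext; intros i Hi. rewrite <- rsum_mul_l. apply rsum_ext; intros; ring.
  - rewrite rsum_swap. apply rsum_ext; intros l Hl. rewrite <- rsum_mul_r. apply rsum_ext; intros; ring.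
Qed.

Lemma lc_delta d j b : (j < d)%nat -> veq (lc d (fun i => if Nat.eqb i j then 1 else 0) b) (b j).
Proof.
  intros Hj k. unfold lc. rewrite (rsum_single d j); auto.
  - rewrite Nat.eqb_refl. ring.
  - intros i Hi Hne. apply Nat.eqb_neq in Hne. rewrite Hne. ring.
Qed.

Lemma sub_lc n V d c e : is_subspace n V -> (forall i, (i < d)%nat -> V (e i)) -> V (lc d c e).
Proof.
  intros [Hin [Hveq [H0 [Hadd Hsc]]]] He. induction d.
  - apply (Hveq (fun _ => 0)); auto. intros k; reflexivity.
  - apply (Hveq (vadd (lc d c e) (vscal (c d) (e d)))).
    + apply Hadd. apply IHd; intros; apply He; lia. apply Hsc, He; lia.
    + intros k. reflexivity.
Qed.

Definition orthonormal (F : vec -> vec -> R) d (p : nat -> vec) : Prop :=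
  forall i j, (i < d)%nat -> (j < d)%nat -> F (p i) (p j) = if Nat.eqb i j then 1 else 0.

Definition indep d (b : nat -> vec) : Prop :=
  forall c, (forall k, lc d c b k = 0) -> forall j, (j < d)%nat -> c j = 0.

Definition good_form (V : vec -> Prop) (F : vec -> vec -> R) : Prop :=
  (forall x x' y, veq x x' -> F x y = F x' y) /\
  (forall x y, F x y = F y x) /\
  (forall d c e y, F (lc d c e) y = rsum d (fun i => c i * F (e i) y)) /\
  (forall x, V x -> nonzero_vec x -> 0 < F x x).

Lemma orth_coef F d c p j :
  (forall d c e y, F (lc d c e) y = rsum d (fun i => c i * F (e i) y)) ->
  orthonormal F d p -> (j < d)%nat -> F (lc d c p) (p j) = c j.
Proof.
  intros Hlin Ho Hj. rewrite Hlin. rewrite (rsum_single d j); auto.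
  - rewrite Ho, Nat.eqb_refl; auto. ring.
  - intros i Hi Hne. rewrite Ho; auto. apply Nat.eqb_neq in Hne. rewrite Hne. ring.
Qed.

Lemma orth_expand F V d p x :
  (forall x x' y, veq x x' -> F x y = F x' y) ->
  (forall d c e y, F (lc d c e) y = rsum d (fun i => c i * F (e i) y)) ->
  orthonormal F d p -> (forall x, V x -> exists c, veq x (lc d c p)) ->
  V x -> veq x (lc d (fun i => F x (p i)) p).
Proof.
  intros Hext Hlin Ho Hsp Hx. destruct (Hsp x Hx) as [c Hc].
  intros k. rewrite (Hc k). apply lc_ext_c. intros i Hi.
  rewrite (Hext x (lc d c p)); auto. rewrite orth_coef; auto.
Qed.

Lemma orth_indep F d p :
  (forall x x' y, veq x x' -> F x y = F x' y) ->
  (forall d c e y, F (lc d c e) y = rsum d (fun i => c i * F (e i) y)) ->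
  orthonormal F d p -> indep d p.
Proof.
  intros Hext Hlin Ho c Hc j Hj.
  rewrite <- (orth_coef F d c p j); auto.
  rewrite (Hext _ (lc 0 (fun _ => 0) p)). rewrite Hlin. reflexivity.
  intros k. rewrite Hc. reflexivity.
Qed.


Lemma eqb_ne i m : (i < m)%nat -> Nat.eqb i m = false.
Proof. intros; apply Nat.eqb_neq; lia. Qed.
Lemma ltb_t i m : (i < m)%nat -> Nat.ltb i m = true.
Proof. intros; apply Nat.ltb_lt; lia. Qed.

Lemma GS_inv n V F b d0 :
  is_subspace n V -> good_form V F -> (forall j, (j < d0)%nat -> V (b j)) -> indep d0 b ->
  forall m, (m <= d0)%nat -> exists (p : nat -> vec) (al Ga : nat -> nat -> R),
    (forall i, (i < m)%nat -> V (p i)) /\ orthonormal F m p /\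
    (forall i, (i < m)%nat -> veq (p i) (lc m (al i) b)) /\
    (forall j, (j < m)%nat -> veq (b j) (lc m (Ga j) p)).
Proof.
  intros HV [Hext [Hsym [Hlin Hpos]]] Hb Hind.
  induction m as [|m IH]; intros Hm.
  - exists (fun _ _ => 0), (fun _ _ => 0), (fun _ _ => 0).
    split; [|split; [|split]]; intros until 1; lia.
  - destruct (IH ltac:(lia)) as (p & al & Ga & HpV & Hpo & Hpal & HbGa).
    set (be := fun j => F (b m) (p j)).
    set (q := fun i => if Nat.eqb i m then b m else p i).
    set (be' := fun i => if Nat.eqb i m then 1 else - be i).
    set (w := lc (S m) be' q).
    assert (Hqm : forall i, (i < m)%nat -> q i = p i).
    { intros i Hi. unfold q. rewrite eqb_ne; auto. }
    assert (HqV : forall i, (i < S m)%nat -> V (q i)).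
    { intros i Hi. unfold q. destruct (Nat.eqb_spec i m). apply Hb; lia. apply HpV; lia. }
    assert (W1 : forall j, (j < m)%nat -> F w (p j) = 0).
    { intros j Hj. unfold w. rewrite Hlin. simpl rsum.
      rewrite (rsum_ext m _ (fun i => - be i * F (p i) (p j))).
      2:{ intros i Hi. unfold be', q. rewrite eqb_ne; auto. }
      rewrite (rsum_single m j); auto.
      - rewrite Hpo, Nat.eqb_refl; auto. unfold be', q, be. rewrite Nat.eqb_refl. ring.
      - intros i Hi Hne. rewrite Hpo; auto. apply Nat.eqb_neq in Hne. rewrite Hne. ring. }
    set (D := fun i l => if Nat.eqb i m then (if Nat.eqb l m then 1 else 0)
                         else (if Nat.ltb l m then al i l else 0)).
    assert (W2 : forall i, (i < S m)%nat -> veq (q i) (lc (S m) (D i) b)).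
    { intros i Hi k. destruct (Nat.eq_dec i m) as [->|Hne].
      - unfold q. rewrite Nat.eqb_refl.
        transitivity (lc (S m) (fun l => if Nat.eqb l m then 1 else 0) b k).
        + symmetry; apply lc_delta; lia.
        + apply lc_ext_c; intros l Hl; unfold D; rewrite Nat.eqb_refl; reflexivity.
      - rewrite Hqm by lia. rewrite (Hpal i ltac:(lia) k). unfold lc. simpl rsum.
        unfold D. rewrite (eqb_ne i m) by lia. rewrite Nat.ltb_irrefl.
        rewrite Rmult_0_l, Rplus_0_r. apply rsum_ext. intros l Hl. rewrite ltb_t; auto. }
    set (ga := fun l => rsum (S m) (fun i => be' i * D i l)).
    assert (W3 : veq w (lc (S m) ga b)).
    { intros k. unfold w. rewrite (lc_ext_e (S m) be' q (fun i => lc (S m) (D i) b)); auto.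
      apply lc_lc. }
    assert (W3m : ga m = 1).
    { unfold ga. simpl rsum. rewrite rsum_zero.
      - unfold be', D. rewrite !Nat.eqb_refl. ring.
      - intros i Hi. unfold D. rewrite eqb_ne by auto. rewrite Nat.ltb_irrefl. ring. }
    assert (W4 : nonzero_vec w).
    { apply NNPP. intros Hn. unfold nonzero_vec in Hn.
      set (ga' := fun l => if Nat.ltb l (S m) then ga l else 0).
      assert (H0 : forall k, lc d0 ga' b k = 0).
      { intros k. unfold lc. rewrite (rsum_tail (S m) d0); auto.
        - transitivity (lc (S m) ga b k).
          + unfold lc. apply rsum_ext. intros i Hi. unfold ga'. rewrite ltb_t; auto.
          + rewrite <- W3. apply NNPP. intros Hk. apply Hn. exists k; auto.
        - intros i Hi1 Hi2. unfold ga'. destruct (Nat.ltb_spec i (S m)); [lia|ring]. }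
      specialize (Hind ga' H0 m ltac:(lia)). unfold ga' in Hind. rewrite ltb_t in Hind by lia. lra. }
    assert (W5 : V w) by (apply (sub_lc n); auto).
    assert (W6 : 0 < F w w) by auto.
    set (s := sqrt (F w w)).
    assert (Hs : 0 < s) by (apply sqrt_lt_R0; auto).
    assert (Hss : s * s = F w w) by (apply sqrt_sqrt; lra).
    set (pm := lc (S m) (fun i => / s * be' i) q).
    assert (Fpm : forall y, F pm y = / s * F w y).
    { intros y. unfold pm, w. rewrite !Hlin. rewrite <- rsum_mul_l. apply rsum_ext; intros; ring. }
    assert (HpmV : V pm) by (apply (sub_lc n); auto).
    exists (fun i => if Nat.eqb i m then pm else p i).
    exists (fun i => if Nat.eqb i m then (fun l => rsum (S m) (fun i' => / s * be' i' * D i' l))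
                else (fun l => if Nat.ltb l m then al i l else 0)).
    exists (fun j => if Nat.eqb j m then (fun i => if Nat.eqb i m then s else be i)
                else (fun i => if Nat.ltb i m then Ga j i else 0)).
    split; [|split; [|split]].
    + intros i Hi. destruct (Nat.eqb_spec i m); auto. apply HpV; lia.
    + intros i j Hi Hj. cbv beta.
      destruct (Nat.eqb_spec i m) as [->|Hi']; destruct (Nat.eqb_spec j m) as [->|Hj'].
      * rewrite Nat.eqb_refl. rewrite Fpm, (Hsym w pm), Fpm.
        rewrite <- Hss. field. lra.
      * rewrite (proj2 (Nat.eqb_neq m j)) by lia. rewrite Fpm, W1 by lia. ring.
      * rewrite (proj2 (Nat.eqb_neq i m)) by lia. rewrite Hsym, Fpm, W1 by lia. ring.
      * apply Hpo; lia.
    + intros i Hi k. destruct (Nat.eqb_spec i m) as [->|Hne].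
      * unfold pm. rewrite (lc_ext_e (S m) _ q (fun i => lc (S m) (D i) b)); auto.
        rewrite lc_lc. apply lc_ext_c. intros l Hl. apply rsum_ext. intros; ring.
      * rewrite (Hpal i ltac:(lia) k). unfold lc. simpl rsum. rewrite Nat.ltb_irrefl.
        rewrite Rmult_0_l, Rplus_0_r. apply rsum_ext. intros l Hl. rewrite ltb_t; auto.
    + intros j Hj k. destruct (Nat.eqb_spec j m) as [->|Hne].
      * unfold lc. simpl rsum. rewrite Nat.eqb_refl.
        rewrite (rsum_ext m _ (fun i => be i * p i k)).
        2:{ intros i Hi. rewrite !eqb_ne; auto. }
        unfold pm, lc. simpl rsum.
        rewrite (rsum_ext m (fun i => / s * be' i * q i k) (fun i => / s * (- (be i * p i k)))).
        2:{ intros i Hi. unfold be', q. rewrite eqb_ne; auto. ring. }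
        rewrite rsum_mul_l. unfold be', q. rewrite Nat.eqb_refl.
        assert (rsum m (fun i => - (be i * p i k)) = - rsum m (fun i => be i * p i k)).
        { rewrite <- (Rmult_1_l (rsum m (fun i => be i * p i k))). rewrite Ropp_mult_distr_l.
          rewrite <- rsum_mul_l. apply rsum_ext; intros; ring. }
        rewrite H. field. lra.
      * rewrite (HbGa j ltac:(lia) k). unfold lc. simpl rsum. rewrite Nat.ltb_irrefl.
        rewrite Rmult_0_l, Rplus_0_r. apply rsum_ext. intros i Hi. rewrite ltb_t, eqb_ne; auto.
Qed.

Lemma GS n V F b d0 :
  is_subspace n V -> good_form V F -> (forall j, (j < d0)%nat -> V (b j)) -> indep d0 b ->
  (forall x, V x -> exists c, veq x (lc d0 c b)) ->
  exists p, (forall i, (i < d0)%nat -> V (p i)) /\ orthonormal F d0 p /\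
    (forall x, V x -> exists c, veq x (lc d0 c p)).
Proof.
  intros HV HF Hb Hind Hsp.
  destruct (GS_inv n V F b d0 HV HF Hb Hind d0 (le_n _)) as (p & al & Ga & HpV & Hpo & _ & HbGa).
  exists p. split; [auto|split; [auto|]].
  intros x Hx. destruct (Hsp x Hx) as [c Hc].
  exists (fun l => rsum d0 (fun i => c i * Ga i l)).
  intros k. rewrite Hc. rewrite (lc_ext_e d0 c b (fun i => lc d0 (Ga i) p)); auto.
  apply lc_lc.
Qed.


Lemma bil_ext n B x x' y y' : veq x x' -> veq y y' -> bil n B x y = bil n B x' y'.
Proof. intros Hx Hy. unfold bil. apply rsum_ext; intros i Hi. apply rsum_ext; intros j Hj.
  rewrite Hx, Hy. reflexivity. Qed.

Lemma bil_lc_l n B d c e y : bil n B (lc d c e) y = rsum d (fun i => c i * bil n B (e i) y).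
Proof.
  unfold bil, lc.
  transitivity (rsum n (fun a => rsum n (fun b => rsum d (fun i => c i * (e i a * B a b * y b))))).
  - apply rsum_ext; intros a Ha. apply rsum_ext; intros b Hb.
    rewrite <- rsum_mul_r, <- rsum_mul_r. apply rsum_ext; intros; ring.
  - transitivity (rsum n (fun a => rsum d (fun i => rsum n (fun b => c i * (e i a * B a b * y b))))).
    + apply rsum_ext; intros a Ha. apply rsum_swap.
    + rewrite rsum_swap. apply rsum_ext; intros i Hi. rewrite <- rsum_mul_l.
      apply rsum_ext; intros a Ha. rewrite <- rsum_mul_l. reflexivity.
Qed.

Lemma bil_lc_r n B d c e x : bil n B x (lc d c e) = rsum d (fun i => c i * bil n B x (e i)).
Proof.
  unfold bil, lc.
  transitivity (rsum n (fun a => rsum d (fun i => rsum n (fun b => c i * (x a * B a b * e i b))))).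
  - apply rsum_ext; intros a Ha. rewrite rsum_swap. apply rsum_ext; intros b Hb.
    rewrite <- rsum_mul_l. apply rsum_ext; intros; ring.
  - rewrite rsum_swap. apply rsum_ext; intros i Hi. rewrite <- rsum_mul_l.
    apply rsum_ext; intros a Ha. rewrite <- rsum_mul_l. reflexivity.
Qed.

Lemma bil_sym n B x y : (forall i j, B i j = B j i) -> bil n B x y = bil n B y x.
Proof. intros HB. unfold bil. rewrite rsum_swap. apply rsum_ext; intros; apply rsum_ext; intros.
  rewrite HB. ring. Qed.

Lemma bil_zero_l n B x y : (forall i, (i < n)%nat -> x i = 0) -> bil n B x y = 0.
Proof. intros H. unfold bil. apply rsum_zero; intros i Hi; apply rsum_zero; intros j Hj.
  rewrite H; auto; ring. Qed.

Lemma bil_zero_r n B x y : (forall i, (i < n)%nat -> y i = 0) -> bil n B x y = 0.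
Proof. intros H. unfold bil. apply rsum_zero; intros i Hi; apply rsum_zero; intros j Hj.
  rewrite (H j); auto; ring. Qed.

Lemma bil_add_l n B x x' y : bil n B (vadd x x') y = bil n B x y + bil n B x' y.
Proof. unfold bil, vadd. rewrite <- rsum_add. apply rsum_ext; intros.
  rewrite <- rsum_add. apply rsum_ext; intros; ring. Qed.
Lemma bil_add_r n B x y y' : bil n B x (vadd y y') = bil n B x y + bil n B x y'.
Proof. unfold bil, vadd. rewrite <- rsum_add. apply rsum_ext; intros.
  rewrite <- rsum_add. apply rsum_ext; intros; ring. Qed.
Lemma bil_scal_l n B a x y : bil n B (vscal a x) y = a * bil n B x y.
Proof. unfold bil, vscal. rewrite <- rsum_mul_l. apply rsum_ext; intros.
  rewrite <- rsum_mul_l. apply rsum_ext; intros; ring. Qed.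
Lemma bil_scal_r n B a x y : bil n B x (vscal a y) = a * bil n B x y.
Proof. unfold bil, vscal. rewrite <- rsum_mul_l. apply rsum_ext; intros.
  rewrite <- rsum_mul_l. apply rsum_ext; intros; ring. Qed.

Definition uvec (i : nat) : vec := fun k => if Nat.eqb k i then 1 else 0.

Lemma bil_uvec n B i j : (i < n)%nat -> (j < n)%nat -> bil n B (uvec i) (uvec j) = B i j.
Proof.
  intros Hi Hj. unfold bil. rewrite (rsum_single n i); auto.
  - rewrite (rsum_single n j); auto.
    + unfold uvec. rewrite !Nat.eqb_refl. ring.
    + intros b Hb Hne. unfold uvec. apply Nat.eqb_neq in Hne. rewrite Hne. ring.
  - intros a Ha Hne. apply rsum_zero. intros b Hb. unfold uvec. apply Nat.eqb_neq in Hne. rewrite Hne. ring.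
Qed.

Lemma dot_ext n x x' y y' : veq x x' -> veq y y' -> dot n x y = dot n x' y'.
Proof. intros Hx Hy. unfold dot. apply rsum_ext; intros. rewrite Hx, Hy; reflexivity. Qed.

Lemma dot_lc_l n d c e y : dot n (lc d c e) y = rsum d (fun i => c i * dot n (e i) y).
Proof. unfold dot, lc. transitivity (rsum n (fun a => rsum d (fun i => c i * (e i a * y a)))).
  - apply rsum_ext; intros. rewrite <- rsum_mul_r. apply rsum_ext; intros; ring.
  - rewrite rsum_swap. apply rsum_ext; intros. rewrite <- rsum_mul_l. reflexivity. Qed.

Lemma dot_sym n x y : dot n x y = dot n y x.
Proof. unfold dot. apply rsum_ext; intros; ring. Qed.

Lemma dot_add_l n x x' y : dot n (vadd x x') y = dot n x y + dot n x' y.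
Proof. unfold dot, vadd. rewrite <- rsum_add. apply rsum_ext; intros; ring. Qed.
Lemma dot_scal_l n a x y : dot n (vscal a x) y = a * dot n x y.
Proof. unfold dot, vscal. rewrite <- rsum_mul_l. apply rsum_ext; intros; ring. Qed.

Lemma dot_nonneg n x : 0 <= dot n x x.
Proof. unfold dot. apply rsum_nonneg. intros. nra. Qed.

Lemma dot_pos n x : inRn n x -> nonzero_vec x -> 0 < dot n x x.
Proof. intros Hin [i Hi]. assert (i < n)%nat.
  { destruct (Nat.lt_ge_cases i n); auto. exfalso; apply Hi, Hin; auto. }
  unfold dot. apply (rsum_pos n _ i); auto. intros; nra. assert (x i * x i > 0) by (apply Rsqr_pos_lt in Hi; unfold Rsqr in Hi; lra). lra. Qed.

Lemma dot_zero_vec n x : inRn n x -> dot n x x = 0 -> forall k, x k = 0.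
Proof. intros Hin H0 k. apply NNPP. intros Hk.
  assert (0 < dot n x x) by (apply dot_pos; auto; exists k; auto). lra. Qed.

Lemma ocomp_subspace n k h : is_subspace n k -> is_subspace n (ocomp n k h).
Proof.
  intros [Hin [Hveq [H0 [Hadd Hsc]]]]. unfold ocomp.
  split; [|split; [|split; [|split]]].
  - intros x [Hx _]; auto.
  - intros x y [Hx Ho] Hxy. split; [eapply Hveq; eauto|]. intros z Hz.
    rewrite <- (Ho z Hz). apply dot_ext; [intros i; symmetry; apply Hxy|intros i; reflexivity].
  - split; auto. intros y _. unfold dot. apply rsum_zero. intros; ring.
  - intros x y [Hx Hox] [Hy Hoy]. split; auto. intros z Hz. rewrite dot_add_l, Hox, Hoy; auto; ring.
  - intros a x [Hx Hox]. split; auto. intros z Hz. rewrite dot_scal_l, Hox; auto; ring.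
Qed.

Lemma gf_bil n V T : (forall i j, T i j = T j i) ->
  (forall x, V x -> nonzero_vec x -> 0 < bil n T x x) -> good_form V (bil n T).
Proof.
  intros Hs Hp. split; [|split; [|split]]; auto.
  - intros x x' y H. apply bil_ext; auto. intros i; reflexivity.
  - intros; apply bil_sym; auto.
  - intros; apply bil_lc_l.
Qed.

Lemma gf_dot n V : (forall x, V x -> inRn n x) -> good_form V (dot n).
Proof.
  intros HV. split; [|split; [|split]].
  - intros x x' y H. apply dot_ext; auto. intros i; reflexivity.
  - intros; apply dot_sym.
  - intros; apply dot_lc_l.
  - intros x Hx Hnz. apply dot_pos; auto.
Qed.

Lemma same_size (F1 F2 : vec -> vec -> R) V d d' f g :
  (forall x x' y, veq x x' -> F1 x y = F1 x' y) ->
  (forall d c e y, F1 (lc d c e) y = rsum d (fun i => c i * F1 (e i) y)) ->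
  (forall x x' y, veq x x' -> F2 x y = F2 x' y) ->
  (forall d c e y, F2 (lc d c e) y = rsum d (fun i => c i * F2 (e i) y)) ->
  orthonormal F1 d f -> orthonormal F2 d' g ->
  (forall i, (i < d)%nat -> V (f i)) -> (forall j, (j < d')%nat -> V (g j)) ->
  (forall x, V x -> exists c, veq x (lc d c f)) ->
  (forall x, V x -> exists c, veq x (lc d' c g)) -> d = d'.
Proof.
  intros He1 Hl1 He2 Hl2 Hof Hog HfV HgV Hsf Hsg.
  set (M := fun i j => F2 (f i) (g j)). set (N := fun j l => F1 (g j) (f l)).
  assert (H1 : forall i, (i < d)%nat -> rsum d' (fun j => M i j * N j i) = 1).
  { intros i Hi. transitivity (F1 (f i) (f i)).
    2:{ rewrite Hof, Nat.eqb_refl; auto. }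
    symmetry. rewrite (He1 _ (lc d' (fun j => F2 (f i) (g j)) g)).
    - rewrite Hl1. reflexivity.
    - apply (orth_expand F2 V); auto. }
  assert (H2 : forall j, (j < d')%nat -> rsum d (fun i => N j i * M i j) = 1).
  { intros j Hj. transitivity (F2 (g j) (g j)).
    2:{ rewrite Hog, Nat.eqb_refl; auto. }
    symmetry. rewrite (He2 _ (lc d (fun i => F1 (g j) (f i)) f)).
    - rewrite Hl2. reflexivity.
    - apply (orth_expand F1 V); auto. }
  apply INR_eq. rewrite <- rsum_const1, <- rsum_const1.
  rewrite (rsum_ext d _ (fun i => rsum d' (fun j => M i j * N j i))); [| intros; rewrite H1; auto].
  rewrite rsum_swap. apply rsum_ext. intros j Hj. rewrite <- (H2 j Hj). apply rsum_ext; intros; ring.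
Qed.


Definition delta (i j : nat) : R := if Nat.eqb i j then 1 else 0.

Definition Sp (n : nat) (br : vec -> vec -> vec) (h k : vec -> Prop) (T : mat) (tau : R)
  (d0 : nat) (p : nat -> vec) (G C : mat) : Prop :=
  (forall i j, (n <= i)%nat \/ (n <= j)%nat -> G i j = 0) /\
  (forall x y, inRn n x -> inRn n y -> (forall v, ocomp n k h v -> dot n x v = 0) ->
     bil n G x y = 0) /\
  (forall x y, inRn n x -> inRn n y -> (forall v, ocomp n k h v -> dot n x v = 0) ->
     bil n G y x = 0) /\
  (forall i j, G i j = G j i) /\
  (forall Y x y, h Y -> ocomp n k h x -> ocomp n k h y ->
     bil n G (br Y x) y + bil n G x (br Y y) = 0) /\
  (forall X, ocomp n k h X -> dot n X X = 1 -> bil n G X X <= tau) /\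
  (forall i j, (i < d0)%nat -> (j < d0)%nat ->
     bil n G (lc d0 (C i) p) (lc d0 (C j) p) = delta i j) /\
  rsum d0 (fun i => bil n T (lc d0 (C i) p) (lc d0 (C i) p)) = 1 /\
  (forall i j, - tau <= G i j <= tau) /\
  (forall i j, -1 <= C i j <= 1).

Lemma bil_psd n G V x : (forall x, V x -> nonzero_vec x -> 0 < bil n G x x) -> V x -> 0 <= bil n G x x.
Proof.
  intros Hp Hx. destruct (classic (nonzero_vec x)) as [Hnz|Hz].
  - apply Rlt_le; auto.
  - right. symmetry. apply bil_zero_l. intros i _. apply NNPP. intros Hi. apply Hz. exists i; auto.
Qed.

Lemma orth_quad n B d a E : orthonormal (bil n B) d E ->
  bil n B (lc d a E) (lc d a E) = rsum d (fun i => a i * a i).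
Proof.
  intros Ho. rewrite bil_lc_l. apply rsum_ext. intros i Hi. rewrite bil_lc_r.
  rewrite (rsum_single d i); auto.
  - rewrite Ho, Nat.eqb_refl; auto. ring.
  - intros j Hj Hne. rewrite Ho; auto. destruct (Nat.eqb_spec i j); [lia|ring].
Qed.

Lemma dot_sub_l n x y z : dot n (fun k => x k - y k) z = dot n x z - dot n y z.
Proof. unfold dot. rewrite <- rsum_sub. apply rsum_ext; intros; ring. Qed.

Lemma lam_bound n G V tau x :
  is_subspace n V ->
  (forall x, V x -> nonzero_vec x -> 0 < bil n G x x) ->
  (forall X, V X -> dot n X X = 1 -> bil n G X X <= tau) -> 0 < tau ->
  V x -> bil n G x x <= tau * dot n x x.
Proof.
  intros HV Hp Hl Ht Hx. pose proof (dot_nonneg n x) as Hd.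
  destruct HV as [Hin [Hveq [H0 [Hadd Hsc]]]].
  destruct (Req_dec (dot n x x) 0) as [Hz|Hnz].
  - rewrite (bil_zero_l n G x x). nra. intros i _. apply (dot_zero_vec n x); auto.
  - set (s := sqrt (dot n x x)).
    assert (Hs : 0 < s) by (apply sqrt_lt_R0; lra).
    assert (Hss : s * s = dot n x x) by (apply sqrt_sqrt; lra).
    assert (H1 : bil n G (vscal (/ s) x) (vscal (/ s) x) <= tau).
    { apply Hl. apply Hsc; auto. rewrite dot_scal_l, dot_sym, dot_scal_l, <- Hss. field. lra. }
    rewrite bil_scal_l, bil_scal_r in H1. rewrite <- Hss.
    assert (bil n G x x = (s * s) * (/ s * (/ s * bil n G x x))) by (field; lra).
    rewrite H, (Rmult_comm tau). apply Rmult_le_compat_l; nra.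
Qed.

Lemma Gbox n G V tau dq q i j :
  is_subspace n V ->
  (forall x y, inRn n x -> inRn n y -> (forall v, V v -> dot n x v = 0) ->
     bil n G x y = 0 /\ bil n G y x = 0) ->
  (forall i j, G i j = G j i) ->
  (forall x, V x -> nonzero_vec x -> 0 < bil n G x x) ->
  (forall X, V X -> dot n X X = 1 -> bil n G X X <= tau) -> 0 < tau ->
  (forall l, (l < dq)%nat -> V (q l)) -> orthonormal (dot n) dq q ->
  (forall x, V x -> exists c, veq x (lc dq c q)) ->
  (i < n)%nat -> (j < n)%nat -> - tau <= G i j <= tau.
Proof.
  intros HV Hsupp Hsym Hp Hl Ht HqV Hqo Hqs Hi Hj.
  assert (HV' := HV). destruct HV' as [Hin [Hveq [H0 [Hadd Hsc]]]].
  set (v := fun a => lc dq (fun l => q l a) q).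
  set (w := fun a => fun m => uvec a m - v a m).
  assert (HvV : forall a, V (v a)) by (intros; apply (sub_lc n); auto).
  assert (Hdotq : forall a l, (a < n)%nat -> (l < dq)%nat -> dot n (q l) (uvec a) = q l a).
  { intros a l Ha Hl'. unfold dot. rewrite (rsum_single n a); auto.
    - unfold uvec; rewrite Nat.eqb_refl; ring.
    - intros b Hb Hne. unfold uvec. apply Nat.eqb_neq in Hne. rewrite Hne. ring. }
  assert (Hwo : forall a, (a < n)%nat -> forall y, V y -> dot n (w a) y = 0).
  { intros a Ha y Hy. rewrite dot_sym.
    rewrite (dot_ext n y (lc dq (fun l => dot n y (q l)) q) (w a) (w a)).
    2:{ apply (orth_expand (dot n) V); auto. intros; apply dot_ext; auto; intros ?; reflexivity.
        intros; apply dot_lc_l. }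
    2:{ intros ?; reflexivity. }
    rewrite dot_lc_l. apply rsum_zero. intros l Hl'. unfold w. rewrite (dot_sym n (q l)), dot_sub_l.
    rewrite (dot_sym n (uvec a)), Hdotq; auto. unfold v. rewrite dot_lc_l.
    rewrite (rsum_single dq l); auto.
    - rewrite Hqo, Nat.eqb_refl; auto. ring.
    - intros m Hm Hne. rewrite Hqo; auto. apply Nat.eqb_neq in Hne. rewrite Hne. ring. }
  assert (Huin : forall a, (a < n)%nat -> inRn n (uvec a)).
  { intros a Ha m Hm. unfold uvec. destruct (Nat.eqb_spec m a); [lia|reflexivity]. }
  assert (Hwin : forall a, (a < n)%nat -> inRn n (w a)).
  { intros a Ha m Hm. unfold w. rewrite (Huin a Ha m Hm), (Hin (v a) (HvV a) m Hm). ring. }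
  assert (Hdec : forall a, veq (uvec a) (vadd (v a) (w a))).
  { intros a m. unfold vadd, w. ring. }
  assert (Hvv : forall a, (a < n)%nat -> dot n (v a) (v a) <= 1).
  { intros a Ha. assert (E : dot n (uvec a) (uvec a) = 1).
    { unfold dot. rewrite (rsum_single n a); auto.
      - unfold uvec; rewrite Nat.eqb_refl; ring.
      - intros b Hb Hne. unfold uvec. apply Nat.eqb_neq in Hne. rewrite Hne. ring. }
    rewrite (dot_ext n _ (vadd (v a) (w a)) _ (vadd (v a) (w a))) in E; auto.
    rewrite dot_add_l, (dot_sym n (v a)), (dot_sym n (w a)), !dot_add_l in E.
    rewrite (dot_sym n (v a) (w a)), (Hwo a Ha (v a) (HvV a)) in E.
    pose proof (dot_nonneg n (w a)). nra. }
  assert (Hbv : forall a, (a < n)%nat -> bil n G (v a) (v a) <= tau).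
  { intros a Ha. pose proof (lam_bound n G V tau (v a) HV Hp Hl Ht (HvV a)).
    pose proof (Hvv a Ha). pose proof (dot_nonneg n (v a)). nra. }
  assert (E : G i j = bil n G (v i) (v j)).
  { rewrite <- (bil_uvec n G i j); auto.
    rewrite (bil_ext n G _ (vadd (v i) (w i)) _ (vadd (v j) (w j))); auto.
    rewrite bil_add_l, !bil_add_r.
    destruct (Hsupp (w i) (v j) (Hwin i Hi) (Hin _ (HvV j)) (Hwo i Hi)) as [E1 _].
    destruct (Hsupp (w i) (w j) (Hwin i Hi) (Hwin j Hj) (Hwo i Hi)) as [E2 _].
    destruct (Hsupp (w j) (v i) (Hwin j Hj) (Hin _ (HvV i)) (Hwo j Hj)) as [_ E3].
    rewrite E1, E2, E3. ring. }
  assert (Hp1 : 0 <= bil n G (vadd (v i) (v j)) (vadd (v i) (v j))).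
  { apply (bil_psd n G V); auto. }
  assert (Hp2 : 0 <= bil n G (vadd (v i) (vscal (-1) (v j))) (vadd (v i) (vscal (-1) (v j)))).
  { apply (bil_psd n G V); auto. }
  rewrite bil_add_l, !bil_add_r in Hp1. rewrite bil_add_l, !bil_add_r, !bil_scal_l, !bil_scal_r in Hp2.
  rewrite (bil_sym n G (v j) (v i)) in Hp1, Hp2; auto.
  pose proof (Hbv i Hi). pose proof (Hbv j Hj). rewrite E. split; nra.
Qed.


Lemma dirA n br h k T tau d0 p dq q G :
  is_subspace n (ocomp n k h) -> (forall i j, T i j = T j i) ->
  (forall x, ocomp n k h x -> nonzero_vec x -> 0 < bil n T x x) -> 0 < tau ->
  (forall i, (i < d0)%nat -> ocomp n k h (p i)) -> orthonormal (bil n T) d0 p ->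
  (forall x, ocomp n k h x -> exists c, veq x (lc d0 c p)) ->
  (forall i, (i < dq)%nat -> ocomp n k h (q i)) -> orthonormal (dot n) dq q ->
  (forall x, ocomp n k h x -> exists c, veq x (lc dq c q)) ->
  C_set n br h k T tau G -> exists C, Sp n br h k T tau d0 p G C.
Proof.
  intros HV HTs HTp Ht HpV Hpo Hps HqV Hqo Hqs
    [[[[Ha Hb] [Hsym [Hpos Hadi]]] Htr] Hlam].
  destruct Htr as (d & e & HeV & Heo & Hes & Htr).
  assert (Hd : d = d0).
  { apply (same_size (bil n G) (bil n T) (ocomp n k h) d d0 e p); auto.
    - intros; apply bil_ext; auto; intros ?; reflexivity.
    - intros; apply bil_lc_l.
    - intros; apply bil_ext; auto; intros ?; reflexivity.
    - intros; apply bil_lc_l. }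
  subst d.
  set (C := fun i j => if Nat.ltb i d0 && Nat.ltb j d0 then bil n T (e i) (p j) else 0).
  assert (HE : forall i, (i < d0)%nat -> veq (lc d0 (C i) p) (e i)).
  { intros i Hi m. rewrite (lc_ext_c d0 (C i) (fun j => bil n T (e i) (p j)) p).
    - symmetry. apply (orth_expand (bil n T) (ocomp n k h)); auto.
      + intros; apply bil_ext; auto; intros ?; reflexivity.
      + intros; apply bil_lc_l.
    - intros j Hj. unfold C. rewrite (proj2 (Nat.ltb_lt i d0) Hi), (proj2 (Nat.ltb_lt j d0) Hj). reflexivity. }
  assert (Hpsd : forall x, ocomp n k h x -> 0 <= bil n T x x).
  { intros x Hx. apply (bil_psd n T (ocomp n k h)); auto. }
  exists C. unfold Sp.
  split; [auto|]. split; [intros x y Hx Hy Ho; apply (proj1 (Hb x y Hx Hy Ho))|].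
  split; [intros x y Hx Hy Ho; apply (proj2 (Hb x y Hx Hy Ho))|].
  split; [auto|]. split; [auto|]. split; [auto|].
  split.
  { intros i j Hi Hj. rewrite (bil_ext n G _ (e i) _ (e j)) by auto. apply Heo; auto. }
  split.
  { rewrite Htr. apply rsum_ext. intros i Hi. apply bil_ext; auto. }
  split.
  { intros i j. destruct (Nat.lt_ge_cases i n); destruct (Nat.lt_ge_cases j n).
    - apply (Gbox n G (ocomp n k h) tau dq q i j); auto.
    - rewrite Ha by lia. lra.
    - rewrite Ha by lia. lra.
    - rewrite Ha by lia. lra. }
  intros i j. unfold C.
  destruct (Nat.ltb_spec i d0); destruct (Nat.ltb_spec j d0); simpl; try lra.
  assert (Hsq : bil n T (e i) (p j) * bil n T (e i) (p j) <= 1).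
  { transitivity (bil n T (e i) (e i)).
    - rewrite <- (bil_ext n T _ (e i) _ (e i) (HE i H) (HE i H)).
      rewrite orth_quad; auto. 
      rewrite <- (rsum_ge_term d0 j (fun l => C i l * C i l)); auto.
      + unfold C. rewrite (proj2 (Nat.ltb_lt i d0) H), (proj2 (Nat.ltb_lt j d0) H0). simpl. lra.
      + intros; nra.
    - rewrite Htr. apply (rsum_ge_term d0 i (fun i => bil n T (e i) (e i))); auto. }
  nra.
Qed.


Definition SQI (d : nat) : Prop := forall (A B : nat -> nat -> R),
  (forall i l, (i < d)%nat -> (l < d)%nat -> rsum d (fun j => A i j * B j l) = if Nat.eqb i l then 1 else 0) ->
  (forall i l, (i < d)%nat -> (l < d)%nat -> rsum d (fun j => B i j * A j l) = if Nat.eqb i l then 1 else 0).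

Lemma dirB n br h k T tau d0 p G C :
  SQI d0 -> is_subspace n (ocomp n k h) ->
  (forall i, (i < d0)%nat -> ocomp n k h (p i)) ->
  (forall x, ocomp n k h x -> exists c, veq x (lc d0 c p)) ->
  Sp n br h k T tau d0 p G C -> C_set n br h k T tau G.
Proof.
  intros Hsqi HV HpV Hps (Ha & Hb1 & Hb2 & Hsym & Hadi & Hlam & Hf & Hg & Hgb & Hcb).
  set (E := fun i => lc d0 (C i) p).
  set (B := fun j l => rsum d0 (fun m => bil n G (p j) (p m) * C l m)).
  assert (HAB : forall i l, (i < d0)%nat -> (l < d0)%nat ->
            rsum d0 (fun j => C i j * B j l) = if Nat.eqb i l then 1 else 0).
  { intros i l Hi Hl. change (if Nat.eqb i l then 1 else 0) with (delta i l). rewrite <- (Hf i l Hi Hl). rewrite bil_lc_l. apply rsum_ext. intros j Hj.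
    rewrite bil_lc_r. unfold B. f_equal. apply rsum_ext. intros; ring. }
  pose proof (Hsqi C B HAB) as HBA.
  assert (Hpsp : forall j, (j < d0)%nat -> veq (p j) (lc d0 (B j) E)).
  { intros j Hj m. unfold E. rewrite lc_lc.
    rewrite (lc_ext_c d0 _ (fun l => if Nat.eqb l j then 1 else 0)).
    - symmetry; apply lc_delta; auto.
    - intros l Hl. rewrite HBA; auto. rewrite Nat.eqb_sym. reflexivity. }
  assert (HEV : forall i, (i < d0)%nat -> ocomp n k h (E i)).
  { intros i Hi. apply (sub_lc n); auto. }
  assert (Hsp : forall x, ocomp n k h x -> exists c, veq x (lc d0 c E)).
  { intros x Hx. destruct (Hps x Hx) as [c Hc].
    exists (fun i => rsum d0 (fun j => c j * B j i)). intros m.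
    rewrite Hc. rewrite (lc_ext_e d0 c p (fun j => lc d0 (B j) E)); auto. apply lc_lc. }
  assert (Ho : orthonormal (bil n G) d0 E).
  { intros i j Hi Hj. apply Hf; auto. }
  split; [split|].
  - split; [split|split; [auto|split]].
    + auto.
    + intros x y Hx Hy Hor. split; auto.
    + intros x Hx Hnz. destruct (Hsp x Hx) as [a Ha'].
      rewrite (bil_ext n G x (lc d0 a E) x (lc d0 a E)); auto.
      rewrite orth_quad; auto.
      destruct (classic (exists i, (i < d0)%nat /\ a i <> 0)) as [[i [Hi Hai]]|Hno].
      * apply (rsum_pos d0 _ i); auto. intros; nra. nra.
      * exfalso. destruct Hnz as [m Hm]. apply Hm. rewrite Ha'. unfold lc.
        apply rsum_zero. intros i Hi. destruct (Req_dec (a i) 0) as [->|Hne]; [ring|].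
        exfalso; apply Hno; exists i; auto.
    + auto.
  - exists d0, E. split; [auto|split; [auto|split; [auto|]]]. symmetry. exact Hg.
  - auto.
Qed.

From HB Require Import structures.
From mathcomp Require Import all_boot all_order all_algebra.
From mathcomp Require Import all_classical all_reals all_analysis.
From mathcomp Require Import Rstruct Rstruct_topology.
Import function_spaces.ArrowAsProduct.

Section MX.
Local Open Scope ring_scope.
Lemma rsum_big d (f : nat -> R) : rsum d f = \sum_(i < d) f i.
Proof.
  elim: d => [|d IHd] /=.
  - by rewrite big_ord0.
  - by rewrite big_ord_recr /= IHd.
Qed.

Lemma square_inverse d (A B : nat -> nat -> R) :
  (forall i l, (i < d)%coq_nat -> (l < d)%coq_nat -> rsum d (fun j => A i j * B j l) = if Nat.eqb i l then 1 else 0) ->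
  (forall i l, (i < d)%coq_nat -> (l < d)%coq_nat -> rsum d (fun j => B i j * A j l) = if Nat.eqb i l then 1 else 0).
Proof.
  move=> H i l /ltP Hi /ltP Hl.
  pose Am := \matrix_(i < d, j < d) A i j.
  pose Bm := \matrix_(i < d, j < d) B i j.
  have HAB : Am *m Bm = 1%:M.
    apply/matrixP => a b; rewrite !mxE.
    rewrite (eq_bigr (fun j : 'I_d => A a j * B j b)); last by move=> j _; rewrite !mxE.
    rewrite -(rsum_big d (fun j => A a j * B j b)) H; try (apply/ltP; exact: ltn_ord).
    case: (Nat.eqb_spec a b) => [/val_inj -> | Hne]; first by rewrite eqxx.
    by case: eqP => // E; case: Hne; rewrite E.
  have HBA : Bm *m Am = 1%:M by apply: mulmx1C.
  move/matrixP: HBA => /(_ (Ordinal Hi) (Ordinal Hl)).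
  rewrite !mxE => E.
  rewrite rsum_big.
  rewrite (eq_bigr (fun j : 'I_d => Bm (Ordinal Hi) j * Am j (Ordinal Hl))); last by move=> j _; rewrite !mxE.
  rewrite E.
  case: (Nat.eqb_spec i l) => [Eil | Hne].
    by subst; rewrite (_ : Ordinal Hi = Ordinal Hl) ?eqxx //; apply: val_inj.
  by case: eqP => // E'; case: Hne; case: E'.
Qed.
End MX.


Section TOP.
Local Open Scope classical_set_scope.
Definition X := bool -> nat -> nat -> R.
Definition Cont (f : X -> R) := continuous f.

Lemma cont_coord b i j : Cont (fun Z => Z b i j).
Proof.
  move=> z.
  have h1 : continuous (fun Z : X => Z b) := @proj_continuous bool (fun _ => nat -> nat -> R) b.
  have h2 : continuous (fun g : nat -> nat -> R => g i) := @proj_continuous nat (fun _ => nat -> R) i.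
  have h3 : continuous (fun g : nat -> R => g j) := @proj_continuous nat (fun _ => R) j.
  exact: (continuous_comp (h1 z) (continuous_comp (h2 (z b)) (h3 (z b i)))).
Qed.

Lemma cont_const c : Cont (fun _ => c).
Proof. exact: cst_continuous. Qed.

Lemma cont_add f g : Cont f -> Cont g -> Cont (fun Z => Rplus (f Z) (g Z)).
Proof. move=> hf hg z. have hfz : f x @[x --> z] --> f z by exact: hf.
  have hgz : g x @[x --> z] --> g z by exact: hg.
  have H := cvgD (V := R^o) hfz hgz. apply: H. Qed.

Lemma cont_mul f g : Cont f -> Cont g -> Cont (fun Z => Rmult (f Z) (g Z)).
Proof. move=> hf hg z. have hfz : f x @[x --> z] --> f z by exact: hf.
  have hgz : g x @[x --> z] --> g z by exact: hg.
  have H := cvgM (K := R) hfz hgz. apply: H. Qed.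

Lemma cont_rsum m (F : nat -> X -> R) : (forall i, Cont (F i)) -> Cont (fun Z => rsum m (fun i => F i Z)).
Proof.
  move=> hF. elim: m => [|m IH] /=; first exact: cont_const.
  exact: (cont_add _ _ IH (hF m)).
Qed.

Lemma closure_pres (S : set X) (f : X -> R) (B : set R) :
  Cont f -> closed B -> (forall z, S z -> B (f z)) -> forall z, closure S z -> B (f z).
Proof.
  move=> hf hB hS z hz. apply: contrapT => nB.
  have hO : open (~` B) by exact: closed_openC.
  have : nbhs (f z) (~` B) by exact: open_nbhs_nbhs.
  move=> /hf hN. have [w [Sw Bw]] := hz _ hN. by apply: Bw; apply: hS.
Qed.

Lemma closed_Rle c : closed (fun r : R => Rle r c).
Proof.
  have -> : (fun r : R => Rle r c) = [set r : R | (r <= c)%O].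
    apply/funext => r. apply/propext. split; by move/RleP.
  exact: closed_le.
Qed.
Lemma closed_Rge c : closed (fun r : R => Rle c r).
Proof.
  have -> : (fun r : R => Rle c r) = [set r : R | (c <= r)%O].
    apply/funext => r. apply/propext. split; by move/RleP.
  exact: closed_ge.
Qed.

Lemma closure_le (S : set X) (f : X -> R) c :
  Cont f -> (forall z, S z -> Rle (f z) c) -> forall z, closure S z -> Rle (f z) c.
Proof. move=> hf hS z hz. exact: (closure_pres S f (fun r => Rle r c) hf (closed_Rle c) hS z hz). Qed.
Lemma closure_ge (S : set X) (f : X -> R) c :
  Cont f -> (forall z, S z -> Rle c (f z)) -> forall z, closure S z -> Rle c (f z).
Proof. move=> hf hS z hz. exact: (closure_pres S f (fun r => Rle c r) hf (closed_Rge c) hS z hz). Qed.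
Lemma closure_eq (S : set X) (f : X -> R) c :
  Cont f -> (forall z, S z -> f z = c) -> forall z, closure S z -> f z = c.
Proof. move=> hf hS z hz. apply: Rle_antisym.
  - apply: (closure_le S f c hf _ z hz) => w /hS ->. exact: Rle_refl.
  - apply: (closure_ge S f c hf _ z hz) => w /hS ->. exact: Rle_refl.
Qed.
End TOP.

Ltac cont := repeat (cbv beta; match goal with
 | |- Cont (fun Z => rsum ?m (fun i => @?F Z i)) => apply (cont_rsum m (fun i Z => F Z i)); intro
 | |- Cont (fun Z => Rplus (@?f Z) (@?g Z)) => apply (cont_add f g)
 | |- Cont (fun Z => Rmult (@?f Z) (@?g Z)) => apply (cont_mul f g)
 | |- Cont (fun Z => Z ?b ?i ?j) => apply cont_coord
 | |- Cont (fun Z => _) => apply cont_const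
 end).

Lemma Sp_closed n br h k T tau d0 p :
  closed (fun Z : X => Sp n br h k T tau d0 p (Z true) (Z false)).
Proof.
  move=> Z HZ.
  set S := (fun Z : X => Sp n br h k T tau d0 p (Z true) (Z false)) in HZ.
  split; [|split; [|split; [|split; [|split; [|split; [|split; [|split; [|split]]]]]]]].
  - intros i j Hij. refine (closure_eq S (fun Z => Z true i j) 0 _ _ Z HZ). cont.
    intros W HW. destruct HW as (H1&H2&H3&H4&H5&H6&H7&H8&H9&H10). apply H1; auto.
  - intros x y Hx Hy Ho. refine (closure_eq S (fun Z => bil n (Z true) x y) 0 _ _ Z HZ).
    unfold bil; cont. intros W HW. destruct HW as (H1&H2&H3&H4&H5&H6&H7&H8&H9&H10). apply H2; auto.
  - intros x y Hx Hy Ho. refine (closure_eq S (fun Z => bil n (Z true) y x) 0 _ _ Z HZ).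
    unfold bil; cont. intros W HW. destruct HW as (H1&H2&H3&H4&H5&H6&H7&H8&H9&H10). apply H3; auto.
  - intros i j. assert (E : (fun Z : X => Rplus (Z true i j) (Rmult (-1) (Z true j i))) Z = 0).
    { refine (closure_eq S (fun Z => Rplus (Z true i j) (Rmult (-1) (Z true j i))) 0 _ _ Z HZ).
      cont. intros W HW. cbv beta. destruct HW as (H1&H2&H3&H4&H5&H6&H7&H8&H9&H10). rewrite (H4 i j). ring. }
    cbv beta in E. lra.
  - intros Y x y HY Hx Hy.
    refine (closure_eq S (fun Z => Rplus (bil n (Z true) (br Y x) y) (bil n (Z true) x (br Y y))) 0 _ _ Z HZ).
    unfold bil; cont. intros W HW. destruct HW as (H1&H2&H3&H4&H5&H6&H7&H8&H9&H10). apply H5; auto.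
  - intros x Hx Hd. refine (closure_le S (fun Z => bil n (Z true) x x) tau _ _ Z HZ).
    unfold bil; cont. intros W HW. destruct HW as (H1&H2&H3&H4&H5&H6&H7&H8&H9&H10). apply H6; auto.
  - intros i j Hi Hj.
    refine (closure_eq S (fun Z => bil n (Z true) (lc d0 (Z false i) p) (lc d0 (Z false j) p)) (delta i j) _ _ Z HZ).
    unfold bil, lc; cont. intros W HW. destruct HW as (H1&H2&H3&H4&H5&H6&H7&H8&H9&H10). apply H7; auto.
  - refine (closure_eq S (fun Z => rsum d0 (fun i => bil n T (lc d0 (Z false i) p) (lc d0 (Z false i) p))) 1 _ _ Z HZ).
    unfold bil, lc; cont. intros W HW. destruct HW as (H1&H2&H3&H4&H5&H6&H7&H8&H9&H10). apply H8; auto.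
  - intros i j. split.
    + refine (closure_ge S (fun Z => Z true i j) (- tau) _ _ Z HZ). cont.
      intros W HW. destruct HW as (H1&H2&H3&H4&H5&H6&H7&H8&H9&H10). apply (proj1 (H9 i j)).
    + refine (closure_le S (fun Z => Z true i j) tau _ _ Z HZ). cont.
      intros W HW. destruct HW as (H1&H2&H3&H4&H5&H6&H7&H8&H9&H10). apply (proj2 (H9 i j)).
  - intros i j. split.
    + refine (closure_ge S (fun Z => Z false i j) (-1) _ _ Z HZ). cont.
      intros W HW. destruct HW as (H1&H2&H3&H4&H5&H6&H7&H8&H9&H10). apply (proj1 (H10 i j)).
    + refine (closure_le S (fun Z => Z false i j) 1 _ _ Z HZ). cont.
      intros W HW. destruct HW as (H1&H2&H3&H4&H5&H6&H7&H8&H9&H10). apply (proj2 (H10 i j)).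
Qed.


Section BOX.
Local Open Scope classical_set_scope.
Definition ival (a : R) : set R := fun r => Rle (- a) r /\ Rle r a.

Lemma ival_compact a : compact (ival a).
Proof.
  have -> : ival a = `[(- a)%R, a]%classic.
    apply/funext => r; apply/propext; rewrite /ival /= in_itv /=.
    split => [[/RleP H1 /RleP H2]|/andP [/RleP H1 /RleP H2]]; last by split.
    by apply/andP; split.
  exact: segment_compact.
Qed.

Definition boxL1 (a : R) : set (nat -> R) := [set g | forall j, ival a (g j)].
Definition boxL2 (a : R) : set (nat -> nat -> R) := [set g | forall i, boxL1 a (g i)].
Definition Box (tau : R) : set X := [set Z | forall b, boxL2 (if b then tau else 1) (Z b)].

Lemma boxL1_compact a : compact (boxL1 a).
Proof. exact: (@tychonoff nat (fun _ => R) (fun _ => ival a) (fun _ => ival_compact a)). Qed.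
Lemma boxL2_compact a : compact (boxL2 a).
Proof. exact: (@tychonoff nat (fun _ => nat -> R) (fun _ => boxL1 a) (fun _ => boxL1_compact a)). Qed.
Lemma Box_compact tau : compact (Box tau).
Proof. exact: (@tychonoff bool (fun _ => nat -> nat -> R) (fun b => boxL2 (if b then tau else 1))
  (fun b => boxL2_compact _)). Qed.
End BOX.

Definition Mt := nat -> nat -> R.
HB.instance Definition _ := Topological.copy Mt (nat -> nat -> R).
HB.instance Definition _ := Pointed.copy Mt (nat -> nat -> R).

Section COVER.
Local Open Scope classical_set_scope.

Lemma coordM_cont i j : continuous (fun B : Mt => B i j).
Proof.
  move=> z.
  have h2 : continuous (fun g : nat -> nat -> R => g i) := @proj_continuous nat (fun _ => nat -> R) i.
  have h3 : continuous (fun g : nat -> R => g j) := @proj_continuous nat (fun _ => R) j.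
  exact: (continuous_comp (h2 z) (h3 (z i))).
Qed.

Lemma nbhs_R (a eps : R) : Rlt 0 eps -> nbhs a (fun r : R => Rlt (Rabs (r - a)) eps).
Proof.
  move=> He.
  have Ho : open ([set r : R | (a - eps < r)%R] `&` [set r : R | (r < a + eps)%R]).
    apply: openI; [exact: open_gt|exact: open_lt].
  have Hin : ([set r : R | (a - eps < r)%R] `&` [set r : R | (r < a + eps)%R]) a.
    split; apply/RltP; rewrite -?RminusE -?RplusE; lra.
  apply: (filterS _ (open_nbhs_nbhs (conj Ho Hin))).
  move=> r [/RltP H1 /RltP H2]. rewrite -?RminusE -?RplusE in H1 H2.
  apply: Rabs_def1; lra.
Qed.

Lemma nbhs_box (A : Mt) n eps : Rlt 0 eps ->
  nbhs A (fun B : Mt => forall i j, (i < n)%coq_nat -> (j < n)%coq_nat -> Rlt (Rabs (B i j - A i j)) eps).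
Proof.
  move=> He.
  have FA := @nbhs_pfilter Mt A.
  have single : forall i j, nbhs A (fun B : Mt => Rlt (Rabs (B i j - A i j)) eps).
    move=> i j. exact: (coordM_cont i j A _ (nbhs_R (A i j) eps He)).
  have rowP : forall i m, nbhs A (fun B : Mt => forall j, (j < m)%coq_nat -> Rlt (Rabs (B i j - A i j)) eps).
    move=> i; elim => [|m IH].
      apply: (@filterS _ _ FA setT); last exact: (@filterT _ _ FA).
      move=> B _ j Hj. lia.
    apply: (@filterS _ _ FA _ _ _ (@filterI _ _ FA _ _ IH (single i m))).
    move=> B [H1 H2] j Hj. destruct (Nat.eq_dec j m) as [->|Hne]; first exact: H2.
    apply: H1; lia.
  have allP : forall m, nbhs A (fun B : Mt => forall i j, (i < m)%coq_nat -> (j < n)%coq_nat -> Rlt (Rabs (B i j - A i j)) eps).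
    elim => [|m IH].
      apply: (@filterS _ _ FA setT); last exact: (@filterT _ _ FA).
      move=> B _ i j Hi. lia.
    apply: (@filterS _ _ FA _ _ _ (@filterI _ _ FA _ _ IH (rowP m n))).
    move=> B [H1 H2] i j Hi Hj. destruct (Nat.eq_dec i m) as [->|Hne]; first exact: H2.
    apply: H1 => //; lia.
  exact: allP.
Qed.

Lemma mopen_open n (U : mat -> Prop) : mopen n U -> open (U : set Mt).
Proof.
  move=> HU. rewrite openE => A HA.
  have [eps [He Hb]] := HU A HA.
  have FA := @nbhs_pfilter Mt A.
  apply: (@filterS _ _ FA _ _ _ (nbhs_box A n eps He)).
  move=> B HB. apply: Hb => i j Hi Hj. exact: HB.
Qed.

Lemma in_In (I : Type) (s : seq {classic I}) (x : {classic I}) : x \in s -> List.In x s.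
Proof.
  elim: s => [|y s IH] //=. rewrite in_cons => /orP [/eqP ->|H]; [left|right]; auto.
Qed.

Lemma compact_mcompact n (K : mat -> Prop) (K' : set Mt) :
  compact K' -> (forall A, K A -> K' A) -> (forall A, K' A -> K A) -> mcompact n K.
Proof.
  move=> Hc HKK' HK'K I U HU Hcov.
  rewrite compact_cover in Hc.
  have := Hc {classic I} setT (fun i => U i : set Mt) (fun i _ => mopen_open n (U i) (HU i)).
  case.
    move=> A /HK'K /Hcov [i Hi]. by exists i.
  move=> D' _ HD'. exists (finmap.enum_fset D') => A /HKK' /HD' [i Hi HUi].
  exists i; split => //. apply: in_In. exact: Hi.
Qed.
End COVER.

Section FIN.
Local Open Scope classical_set_scope.
Lemma Sp_compact n br h k T tau d0 p : Rlt 0 tau ->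
  compact (fun Z : X => Sp n br h k T tau d0 p (Z true) (Z false)).
Proof.
  move=> Ht. apply: (subclosed_compact (Sp_closed n br h k T tau d0 p) (Box_compact tau)).
  move=> Z HZ b i j. destruct HZ as (H1&H2&H3&H4&H5&H6&H7&H8&H9&H10).
  case: b; rewrite /ival.
  - exact: (H9 i j).
  - have := H10 i j. case => Ha Hb. split; lra.
Qed.

Lemma image_compact n br h k T tau d0 p : Rlt 0 tau ->
  compact ((fun Z : X => (Z true : Mt)) @` (fun Z : X => Sp n br h k T tau d0 p (Z true) (Z false))).
Proof.
  move=> Ht. apply: continuous_compact; last exact: Sp_compact.
  apply: continuous_subspaceT.
  exact: (@proj_continuous bool (fun _ => nat -> nat -> R) true).
Qed.
End FIN.

Open Scope R_scope.

Theorem mainTheorem14 (n : nat) (br : vec -> vec -> vec) (h k : vec -> Prop)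
  (T : mat) (tau : R) :
  is_lie_algebra n br ->
  Q_ad_invariant n br ->
  is_subalgebra n br h ->
  dim_ge n (ocomp n (whole n) h) 3 ->
  Hyp_H n br h ->
  M_k n br h (whole n) T ->
  is_subalgebra n br k ->
  (forall x, h x -> k x) ->
  (exists x, k x /\ ~ h x) ->
  0 < tau ->
  mcompact n (C_set n br h k T tau).
Proof.
  intros _ _ _ _ _ HT Hk _ _ Htau.
  assert (HkS : is_subspace n k) by (apply (proj1 Hk)).
  assert (HV : is_subspace n (ocomp n k h)) by (apply ocomp_subspace; auto).
  destruct HT as [_ [Tsym [Tpos _]]].
  assert (HTp : forall x, ocomp n k h x -> nonzero_vec x -> 0 < bil n T x x).
  { intros x [Hx Ho] Hnz. apply Tpos; auto. split; auto. apply (proj1 HkS); auto. }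
  destruct (Classical_Prop.classic (exists G0, C_set n br h k T tau G0)) as [[G0 HG0]|Hnone].
  2:{ intros I U HU Hcov. exists nil. intros A HA. exfalso. apply Hnone. exists A; auto. }
  destruct HG0 as [[_ Htr0] _].
  destruct Htr0 as (d0 & e0 & He0V & He0o & He0s & _).
  assert (Hind : indep d0 e0).
  { apply (orth_indep (bil n G0)).
    - intros; apply bil_ext; auto; intros ?; reflexivity.
    - intros; apply bil_lc_l.
    - intros i j Hi Hj; apply He0o; auto. }
  destruct (GS n (ocomp n k h) (bil n T) e0 d0 HV (gf_bil n _ T Tsym HTp) He0V Hind He0s)
    as (p & HpV & Hpo & Hps).
  destruct (GS n (ocomp n k h) (dot n) e0 d0 HV (gf_dot n _ (proj1 HV)) He0V Hind He0s)
    as (q & HqV & Hqo & Hqs).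
  apply (compact_mcompact n _ _ (image_compact n br h k T tau d0 p Htau)).
  - intros A HA.
    destruct (dirA n br h k T tau d0 p d0 q A HV Tsym HTp Htau HpV Hpo Hps HqV Hqo Hqs HA) as [C HC].
    exists (fun b => if b then A else C); auto.
  - intros A [Z HZ <-].
    apply (dirB n br h k T tau d0 p (Z true) (Z false)); auto.
    intros B1 B2. apply square_inverse.
Qed.
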